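(* Let $q$ be a prime power and $T\in\mathbb F_q[X,Y,Z]$ a reduced polynomial satisfying Property (a): $T(a,0,z)=T(0,b,z)=z$ for all $a,b,z\in\mathbb F_q$, and at least one of the following: (c) for all $a,b,c,d\in\mathbb F_q$ with $a\neq c$ there is a unique $x\in\mathbb F_q$ with $T(x,a,b)=T(x,c,d)$; (e) for all $a,b,c,d\in\mathbb F_q$ with $a\neq c$ there is a unique pair $(y,z)\in\mathbb F_q^2$ with $T(a,y,z)=b$ and $T(c,y,z)=d$. Then for every $z\in\mathbb F_q$ the polynomial $T(X,Y,z)-z\in\mathbb F_q[X,Y]$ is a $\kappa$-polynomial over $\mathbb F_q$.
   Context: A polynomial is reduced if its degree in each variable is less than $q$. A polynomial $f\in\mathbb F_q[X_1,\dots,X_n]$ is a $\kappa$-polynomial over $\mathbb F_q$ if the number $k_a=\#\{\mathbf x\in\mathbb F_q^n: f(\mathbf x)=a\}$ is the same for all $a\in\mathbb F_q^*=\mathbb F_q\setminus\{0\}$. *)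

(* Defs.v *)
From HB Require Import structures.
From mathcomp Require Import all_boot all_order all_algebra all_field.
From mathcomp Require Import mpoly.
Set Implicit Arguments. Unset Strict Implicit. Unset Printing Implicit Defensive.
Import Order.TTheory GRing.Theory.
Local Open Scope ring_scope.

Definition reduced (F : finFieldType) (n : nat) (p : {mpoly F[n]}) : Prop :=
  forall m, m \in msupp p -> forall i : 'I_n, (m i < #|F|)%N.

Definition kappa_poly (F : finFieldType) (n : nat) (f : {mpoly F[n]}) : Prop :=
  forall a b : F, a != 0 -> b != 0 ->
    #|[set x : {ffun 'I_n -> F} | f.@[x] == a]| =
    #|[set x : {ffun 'I_n -> F} | f.@[x] == b]|.

Definition eval3 (F : finFieldType) (T : {mpoly F[3]}) (x y z : F) : F :=
  T.@[tnth [tuple x; y; z]].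

Definition slice_minus (F : finFieldType) (T : {mpoly F[3]}) (z : F) : {mpoly F[2]} :=
  T \mPo [tuple 'X_0; 'X_1; z%:MP] - z%:MP.

(* Main.v *)
Require Import Defs.
From HB Require Import structures.
From mathcomp Require Import all_boot all_order all_algebra all_field.
From mathcomp Require Import mpoly.
Import GRing.Theory.
Local Open Scope ring_scope.

Lemma slice_eval (F : finFieldType) (T : {mpoly F[3]}) z (x : {ffun 'I_2 -> F}) :
  (slice_minus T z).@[x] = eval3 T (x ord0) (x (lift ord0 ord0)) z - z.
Proof.
rewrite /slice_minus mevalB mevalC comp_mpoly_meval /eval3; congr (_ - _).
apply: meval_eq => i; case: i => [[|[|[|//]]] Hi];
  rewrite !(tnth_nth 0) /= ?mevalXU ?mevalC //; congr (x _); exact: val_inj.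
Qed.

Lemma sum_unique (F : finType) (g : F -> bool) :
  (exists! v, g v) -> (\sum_v (g v : nat) = 1)%N.
Proof.
case=> v0 [g0 uq]; rewrite (bigD1 v0) //= g0 big1 // => v /negbTE nv.
case gv: (g v) => //; by rewrite (uq v gv) eqxx in nv.
Qed.

Lemma sum_none (F : finType) (g : F -> bool) :
  (forall v, ~~ g v) -> (\sum_v (g v : nat) = 0)%N.
Proof. by move=> H; rewrite big1 // => v _; rewrite (negbTE (H v)). Qed.

Lemma card_pairs (F : finType) (P : F -> F -> bool) :
  #|[set x : {ffun 'I_2 -> F} | P (x ord0) (x (lift ord0 ord0))]| =
  (\sum_u \sum_v (P u v : nat))%N.
Proof.
rewrite -sum1_card big_mkcond /= pair_big /=.
pose f (p : F * F) : {ffun 'I_2 -> F} :=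
  [ffun i : 'I_2 => if val i == 0%N then p.1 else p.2].
pose g (x : {ffun 'I_2 -> F}) := (x ord0, x (lift ord0 ord0)).
have fK : cancel f g by case=> a b; rewrite /g /f !ffunE.
have gK : cancel g f.
  move=> x; apply/ffunP => i; rewrite /f /g ffunE.
  case: i => [[|[|//]] Hi] /=; congr (x _); exact: val_inj.
rewrite (reindex f); last by exists g => ? _; [apply: fK | apply: gK].
apply: eq_bigr => -[a b] _; rewrite inE /f !ffunE /=.
by case: (P a b).
Qed.

Theorem theorem4p4 (F : finFieldType) (T : {mpoly F[3]}) :
  reduced T ->
  (forall a b z : F, eval3 T a 0 z = z /\ eval3 T 0 b z = z) ->
  ((forall a b c d : F, a != c ->
      exists! x : F, eval3 T x a b = eval3 T x c d)
   \/
   (forall a b c d : F, a != c ->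
      exists! yz : F * F, eval3 T a yz.1 yz.2 = b /\ eval3 T c yz.1 yz.2 = d)) ->
  forall z : F, kappa_poly (slice_minus T z).
Proof.
move=> _ Ha Hce z.
suff H : forall a : F, a != 0 ->
  #|[set x : {ffun 'I_2 -> F} | (slice_minus T z).@[x] == a]| = #|[set~ (0:F)]|.
  by move=> a b a0 b0; rewrite H // H.
move=> a a0.
have -> : [set x : {ffun 'I_2 -> F} | (slice_minus T z).@[x] == a] =
  [set x : {ffun 'I_2 -> F} | (fun u v => eval3 T u v z - z == a) (x ord0) (x (lift ord0 ord0))].
  by apply/setP => x; rewrite !inE slice_eval.
rewrite (@card_pairs F (fun u v => eval3 T u v z - z == a)) -sum1_card [RHS]big_mkcond /=.
case: Hce => [Hc | He].
- rewrite exchange_big /=; apply: eq_bigr => v _.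
  rewrite !inE; case: (eqVneq v 0) => [-> | v0] /=.
    apply: sum_none => u; by rewrite (proj1 (Ha u 0 z)) subrr eq_sym.
  apply: sum_unique.
  case: (Hc v z 0 (a + z) v0) => u [Hu uq]; exists u; split.
    by rewrite Hu (proj1 (Ha u 0 (a+z))) addrK.
  move=> u' /eqP Hu'; apply: uq; rewrite (proj1 (Ha u' 0 (a+z))) -Hu'.
  by rewrite subrK.
- apply: eq_bigr => u _.
  rewrite !inE; case: (eqVneq u 0) => [-> | u0] /=.
    apply: sum_none => v; by rewrite (proj2 (Ha 0 v z)) subrr eq_sym.
  apply: sum_unique.
  have u0' : (0:F) != u by rewrite eq_sym.
  case: (He 0 z u (a + z) u0') => -[y w] [[/= Hw Hy] uq].
  rewrite (proj2 (Ha 0 y w)) in Hw; subst w.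
  exists y; split; first by rewrite Hy addrK.
  move=> y' /eqP Hy'.
  have H1 : eval3 T u y' z = a + z by rewrite -Hy' subrK.
  by case: (uq (y', z) (conj (proj2 (Ha 0 y' z)) H1)) => ->.
Qed.
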